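(* Consider the modification of MultiQT in which the forecast is $q_t=\textsc{Sort}(b_t+\tilde\theta_t)$ and the hidden offsets are updated by $\tilde\theta_{t+1}^{\alpha}=\tilde\theta_t^{\alpha}-\eta(\mathbb{1}\{y_t\le q_t^{\alpha}\}-\alpha)$ for each $\alpha\in\mathcal{A}$. There exist a set of levels $\mathcal{A}$ and a sequence $(y_t,b_t)$ with $|y_t-b_t^{\alpha}|<R$ for all $\alpha,t$ (for some $R>0$) such that for some $\alpha\in\mathcal{A}$, $\lim_{T\to\infty}\frac1T\sum_{t=1}^T\mathbb{1}\{y_t\le q_t^{\alpha}\}\ne\alpha$.
   Context: $\mathcal{A}=\{\alpha_1<\dots<\alpha_m\}\subset(0,1)$ is a set of quantile levels, $\eta>0$ a learning rate, base forecasts $b_t$ have nondecreasing entries, and $\textsc{Sort}(v)$ is the vector whose $i$-th entry is the $i$-th smallest entry of $v$. *)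

(* Defs.v *)
From HB Require Import structures.
From mathcomp Require Import all_boot all_order all_algebra.
From mathcomp Require Import all_classical all_reals all_analysis.
Set Implicit Arguments. Unset Strict Implicit. Unset Printing Implicit Defensive.
Import Order.TTheory GRing.Theory Num.Theory.
Local Open Scope ring_scope.

Definition sortv {R : realType} {m : nat} (v : 'I_m -> R) (i : 'I_m) : R :=
  nth 0 (sort <=%R [seq v j | j <- enum 'I_m]) i.

(* Hidden offsets of the modified MultiQT; time t = 0 here is t = 1 in the
   paper; initial offsets are 0. *)
Fixpoint mqt_theta {R : realType} {m : nat} (A : 'I_m -> R) (eta : R)
  (y : nat -> R) (b : nat -> 'I_m -> R) (t : nat) : 'I_m -> R :=
  match t with
  | 0 => fun _ => 0
  | t'.+1 =>
      let th := mqt_theta A eta y b t' in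
      let q := sortv (fun j => b t' j + th j) in
      fun a => th a - eta * (((y t' <= q a)%R : nat)%:R - A a)
  end.

Definition mqt_q {R : realType} {m : nat} (A : 'I_m -> R) (eta : R)
  (y : nat -> R) (b : nat -> 'I_m -> R) (t : nat) : 'I_m -> R :=
  sortv (fun j => b t j + mqt_theta A eta y b t j).

Definition mqt_cov {R : realType} {m : nat} (A : 'I_m -> R) (eta : R)
  (y : nat -> R) (b : nat -> 'I_m -> R) (a : 'I_m) (T : nat) : R :=
  (\sum_(t < T) ((y t <= mqt_q A eta y b t a)%R : nat)%:R) / T%:R.

(* Main.v *)
Require Import Defs.
From HB Require Import structures.
From mathcomp Require Import all_boot all_order all_algebra.
From mathcomp Require Import all_classical all_reals all_analysis.
From mathcomp Require Import lra.
Import Order.TTheory GRing.Theory Num.Theory numFieldNormedType.Exports.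
Local Open Scope classical_set_scope.
Local Open Scope ring_scope.

Lemma sortv2 (R : realType) (v : 'I_2 -> R) :
  sortv v ord0 = Num.min (v ord0) (v ord_max) /\
  sortv v ord_max = Num.max (v ord0) (v ord_max).
Proof.
rewrite /sortv enum_ordSl enum_ordSl enum_ord0 /= /sort /=.
have -> : lift ord0 ord0 = ord_max :> 'I_2 by apply/val_inj.
case: leP => h /=.
  by [].
by [].
Qed.

Lemma minmax_neg (R : realType) (x : R) : x != 0 ->
  Num.min (- x) x < 0 /\ 0 < Num.max (- x) x.
Proof.
move=> hx; case: (ltrgtP x 0) => h; last by rewrite h eqxx in hx.
  by rewrite min_r ?max_l; lra.
by rewrite min_l ?max_r; lra.
Qed.

Lemma nS (R : realType) (t : nat) : (t.+1)%:R = t%:R + 1 :> R.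
Proof. by rewrite natr1. Qed.

Section Ex.
Variables (R : realType) (eta : R).
Hypothesis heta : 0 < eta.
Definition A0 : 'I_2 -> R := fun j => if (val j == 0)%N then 1/4 else 3/4.
Definition b0 : nat -> 'I_2 -> R :=
  fun _ j => if (val j == 0)%N then - (eta/8) else eta/8.
Definition y0 : nat -> R := fun _ => 0.

Lemma xne0 (t : nat) : eta / 8 - eta * t%:R / 4 != 0.
Proof.
case: t => [|t]; first by rewrite mulr0 mul0r subr0 gt_eqF //; move: heta => ?; lra.
rewrite nS; have : 0 <= t%:R :> R by [].
move=> ht; have h2 := mulr_ge0 (ltW heta) ht; rewrite lt_eqF // mulrDr mulr1; (move: heta => ?; lra).
Qed.

Lemma vals (t : nat) (th : 'I_2 -> R)
  (hth : forall a, th a = if (val a == 0)%N then eta * t%:R / 4 else - (eta * t%:R / 4)) :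
  sortv (fun j => b0 t j + th j) ord0 < 0 /\ 0 < sortv (fun j => b0 t j + th j) ord_max.
Proof.
have [-> ->] := sortv2 _ (fun j : 'I_2 => b0 t j + th j).
rewrite !hth /b0 /=.
have := minmax_neg _ _ (xne0 t).
have -> : - (eta / 8) + eta * t%:R / 4 = - (eta / 8 - eta * t%:R / 4) by rewrite opprB addrC.
have -> : eta / 8 + - (eta * t%:R / 4) = eta / 8 - eta * t%:R / 4 by [].
by [].
Qed.

Lemma theta_eq (t : nat) (a : 'I_2) :
  mqt_theta A0 eta y0 b0 t a =
  if (val a == 0)%N then eta * t%:R / 4 else - (eta * t%:R / 4).
Proof.
elim: t a => [|t IH] a /=.
  by rewrite mulr0 mul0r oppr0; case: ifP.
have [h0 h1] := @vals _ _ IH.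
case: a => [[|[|k]] Hk] //=.
- have -> : Ordinal Hk = ord0 by apply/val_inj.
  rewrite /y0 lt_geF // IH /A0 /= nS; (move: heta => ?; lra).
- have -> : Ordinal Hk = ord_max by apply/val_inj.
  rewrite /y0 (ltW h1) IH /A0 /= nS; (move: heta => ?; lra).
Qed.

Lemma cov0 (T : nat) : mqt_cov A0 eta y0 b0 ord0 T = 0.
Proof.
rewrite /mqt_cov big1 ?mul0r // => t _.
have [h0 _] := @vals t _ (theta_eq t).
by rewrite /mqt_q /y0 lt_geF.
Qed.
End Ex.

Theorem proposition13 (R : realType) (eta : R) (heta : 0 < eta) :
  exists (m : nat) (A : 'I_m -> R),
    (forall i j : 'I_m, (i < j)%N -> A i < A j) /\
    (forall i : 'I_m, 0 < A i < 1) /\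
    exists (y : nat -> R) (b : nat -> 'I_m -> R) (Rb : R),
      (forall t (i j : 'I_m), (i <= j)%N -> b t i <= b t j) /\
      0 < Rb /\
      (forall t (a : 'I_m), `|y t - b t a| < Rb) /\
      exists a : 'I_m, ~ (mqt_cov A eta y b a @ \oo --> A a).
Proof.
exists 2%N, (A0 R); split.
  by move=> [[|[|i]] Hi] [[|[|j]] Hj] //= _; rewrite /A0 /=; lra.
split.
  by move=> [[|[|i]] Hi] //=; rewrite /A0 /=; apply/andP; split; lra.
exists (y0 R), (b0 R eta), eta; split.
  by move=> t [[|[|i]] Hi] [[|[|j]] Hj] //= _; rewrite /b0 /=; lra.
split => //; split.
  move=> t [[|[|i]] Hi] //=; rewrite /b0 /y0 /= sub0r ?opprK ?normrN gtr0_norm; lra.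
exists ord0 => H.
have E : mqt_cov (A0 R) eta (y0 R) (b0 R eta) ord0 = fun=> 0.
  by apply/funext => T; rewrite (cov0 R eta heta).
rewrite E in H.
have := cvg_lim (@norm_hausdorff _ _) H.
rewrite lim_cst /A0 /=; last exact: norm_hausdorff.
move=> h; have h2 : (0:R) = 1/4 by apply: h; exact: eventually_filter. move: h2; lra.
Qed.
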